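(* Let $(P_n)_{n\ge0}$ be the monic polynomials defined by $P_{-1}=0$, $P_0=1$, $xP_n=P_{n+1}+C_nP_{n-1}$, with $C_n=\tfrac14(1-(-1)^nq^{n/2})(1-(-1)^nq^{(n-1)/2})$ for every integer $n$ (so $C_0=0$). Define $a_n=(\alpha^2-1)\gamma_n$, $b_n=-\tfrac12\big(1-(-1)^nq^{n/2}\big)\big((-1)^n-q^{-(n-1)/2}\big)$, $c_n=b_{n+1}C_n-\alpha b_nC_{n-1}-(\alpha^2-1)\gamma_nC_n$, $d_n=(b_{n-1}C_n-\alpha b_nC_{n-1})C_{n-2}$. Then for all $n\ge1$, with the convention $P_j=0$ for $j<0$, $$\mathcal S_qP_n=\alpha_nP_n+b_nC_{n-1}P_{n-2},\qquad U_2\,\mathcal D_qP_n=a_nP_{n+1}+c_nP_{n-1}+d_nP_{n-3}.$$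
   Context: Fix $0<q<1$. With $x(s)=(q^s+q^{-s})/2$, for a complex polynomial $f$: $\mathcal D_qf(x(s))=\frac{f(x(s+1/2))-f(x(s-1/2))}{x(s+1/2)-x(s-1/2)}$, $\mathcal S_qf(x(s))=\frac{f(x(s+1/2))+f(x(s-1/2))}{2}$ (both polynomials). $\alpha=(q^{1/2}+q^{-1/2})/2$, $\alpha_n=(q^{n/2}+q^{-n/2})/2$, $\gamma_n=(q^{n/2}-q^{-n/2})/(q^{1/2}-q^{-1/2})$, $U_2(x)=(\alpha^2-1)(x^2-1)$. *)

(* Defs.v *)
From HB Require Import structures.
From mathcomp Require Import all_boot all_order all_algebra.
From mathcomp Require Import reals exp.
Set Implicit Arguments. Unset Strict Implicit. Unset Printing Implicit Defensive.
Import Order.TTheory GRing.Theory Num.Theory.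
Local Open Scope ring_scope.

Section Defs.
Variable R : realType.
Variable q : R.

Definition qp (r : R) : R := q `^ r.
Definition sgn (n : int) : R := (-1) ^ n.

Definition xs (s : R) : R := (qp s + qp (- s)) / 2.

Definition Sq_at (f : {poly R}) (s : R) : R :=
  (f.[xs (s + 1/2)] + f.[xs (s - 1/2)]) / 2.
Definition Dq_at (f : {poly R}) (s : R) : R :=
  (f.[xs (s + 1/2)] - f.[xs (s - 1/2)]) / (xs (s + 1/2) - xs (s - 1/2)).

Definition alpha : R := (qp (1/2) + qp (-(1/2))) / 2.
Definition alpha_n (n : int) : R := (qp (n%:~R / 2) + qp (- (n%:~R / 2))) / 2.
Definition gamma_n (n : int) : R :=
  (qp (n%:~R / 2) - qp (- (n%:~R / 2))) / (qp (1/2) - qp (-(1/2))).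
Definition U2 (x : R) : R := (alpha ^+ 2 - 1) * (x ^+ 2 - 1).

Definition Cn (n : int) : R :=
  (1 - sgn n * qp (n%:~R / 2)) * (1 - sgn n * qp ((n%:~R - 1) / 2)) / 4.

(* (P_n, P_{n+1}) with P_0 = 1, P_1 = x (from x P_0 = P_1 + C_0 P_{-1}, P_{-1}=0),
   and P_{n+2} = x P_{n+1} - C_{n+1} P_n. *)
Fixpoint Ppair (n : nat) : {poly R} * {poly R} :=
  match n with
  | 0%N => (1, 'X)
  | k.+1 => let: (a, b) := Ppair k in (b, 'X * b - (Cn (k.+1)%:Z) *: a)
  end.
Definition P (n : nat) : {poly R} := (Ppair n).1.
Definition Pz (j : int) : {poly R} :=
  match j with Posz k => P k | Negz _ => 0 end.

Definition an (n : int) : R := (alpha ^+ 2 - 1) * gamma_n n.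
Definition bn (n : int) : R :=
  - (1 - sgn n * qp (n%:~R / 2)) * (sgn n - qp (- ((n%:~R - 1) / 2))) / 2.
Definition cn (n : int) : R :=
  bn (n + 1) * Cn n - alpha * bn n * Cn (n - 1) - (alpha ^+ 2 - 1) * gamma_n n * Cn n.
Definition dn (n : int) : R :=
  (bn (n - 1) * Cn n - alpha * bn n * Cn (n - 1)) * Cn (n - 2).
End Defs.

(* Main.v *)
Require Import Defs.
From HB Require Import structures.
From mathcomp Require Import all_boot all_order all_algebra.
From mathcomp Require Import reals exp.
From mathcomp Require Import ring lra zify.
Import Order.TTheory GRing.Theory Num.Theory.
Local Open Scope ring_scope.
Set Implicit Arguments. Unset Strict Implicit.

Section H.
Variable R : realType.
Variable q : R.
Hypothesis hq0 : 0 < q.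
Hypothesis hq1 : q < 1.

Notation qp := (qp q).
Notation t := (qp (1/2)).

Lemma qpD r u : qp (r + u) = qp r * qp u.
Proof. by rewrite /Defs.qp powRD // (gt_eqF hq0) implybT. Qed.
Lemma qpN r : qp (- r) = (qp r)^-1.
Proof. by rewrite /Defs.qp powRN. Qed.
Lemma qp_gt0 r : 0 < qp r.
Proof. by rewrite /Defs.qp powR_gt0. Qed.
Lemma qp_neq0 r : qp r != 0.
Proof. by rewrite gt_eqF // qp_gt0. Qed.
Lemma t_neq1 : t != 1.
Proof. rewrite /Defs.qp powR_eq1 negb_or; apply/andP; split; first by rewrite lt_eqF.
by rewrite negb_or -leNgt ltW //=; apply/eqP; lra. Qed.
Lemma tt_neq0 : t - t^-1 != 0.
Proof.
have h0 := qp_gt0 (1/2); have h1 := t_neq1.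
rewrite subr_eq0; apply/negP => /eqP h.
have : t * t = 1 by rewrite {2}h mulfV // gt_eqF.
move/eqP; rewrite -expr2 sqrf_eq1 => /orP[] /eqP h2; first by move: h1; rewrite h2 eqxx.
lra.
Qed.

Definition w (i : int) := qp (i%:~R / 2).
Lemma wD1 i : w (i + 1) = w i * t.
Proof. by rewrite /w -qpD intrD mulrDl mul1r. Qed.
Lemma wB1 i : w (i - 1) = w i / t.
Proof. by rewrite /w intrB mulrBl mul1r qpD qpN. Qed.
Lemma wB2 i : w (i - 2) = w i / (t * t).
Proof. rewrite /w intrB mulrBl qpD qpN -qpD; congr (_ / qp _). rewrite -[2%:~R]/(2:R). by field. Qed.
Lemma wB3 i : w (i - 3) = w i / (t * t * t).
Proof. rewrite /w intrB mulrBl qpD qpN -!qpD; congr (_ / qp _). rewrite -[3%:~R]/(3:R). by field. Qed.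
Lemma qm1 i : qp ((i%:~R - 1) / 2) = w i / t.
Proof. by rewrite /w mulrBl mul1r qpD qpN. Qed.
Lemma t_neq0 : t != 0. Proof. exact: qp_neq0. Qed.
Lemma w_neq0 i : w i != 0. Proof. exact: qp_neq0. Qed.

Notation sg := (@sgn R).
Lemma sgD1 i : sg (i + 1) = - sg i.
Proof. by rewrite /sgn expfzDr ?oppr_eq0 ?oner_eq0 // expr1z mulrN1. Qed.
Lemma sgB1 i : sg (i - 1) = - sg i.
Proof. by rewrite -{2}(subrK 1 i) sgD1 opprK. Qed.
Lemma sgB2 i : sg (i - 2) = sg i.
Proof. by rewrite (_ : i - 2 = i - 1 - 1) ?sgB1 ?opprK //; ring. Qed.
Lemma sgB3 i : sg (i - 3) = - sg i.
Proof. by rewrite (_ : i - 3 = i - 2 - 1) ?sgB1 ?sgB2 //; ring. Qed.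
Lemma sg_pm i : sg i = 1 \/ sg i = -1.
Proof.
rewrite /sgn; case: i => n.
  by rewrite [_ ^ _]/(exprz _ _) -signr_odd; case: (odd n); [right|left].
rewrite [_ ^ _]/(exprz _ _) -signr_odd; case: (odd n.+1); [right|left]; rewrite ?invrN ?invr1 //.
Qed.

Lemma alpha_cf : alpha q = (t + t^-1) / 2.
Proof. by rewrite /alpha qpN. Qed.
Lemma alpha_n_cf i : alpha_n q i = (w i + (w i)^-1) / 2.
Proof. by rewrite /alpha_n qpN. Qed.
Lemma gamma_n_cf i : gamma_n q i = (w i - (w i)^-1) / (t - t^-1).
Proof. by rewrite /gamma_n !qpN. Qed.
Lemma Cn_cf i : Cn q i = (1 - sg i * w i) * (1 - sg i * (w i / t)) / 4.
Proof. by rewrite /Cn qm1. Qed.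
Lemma bn_cf i : bn q i = - (1 - sg i * w i) * (sg i - t / w i) / 2.
Proof. by rewrite /bn qpN qm1 invf_div. Qed.

Ltac cf := rewrite /an /cn /dn ?alpha_cf ?alpha_n_cf ?gamma_n_cf ?Cn_cf ?bn_cf
   ?(sgD1, sgB1, sgB2, sgB3, wD1, wB1, wB2, wB3).

Lemma tt1 : t * t - 1 != 0.
Proof. have := tt_neq0.
have -> : t - t^-1 = (t*t-1)/t by field; rewrite t_neq0.
by rewrite mulf_eq0 negb_or => /andP[]. Qed.

Ltac fin m := (try (case: (sg_pm m) => ->)); field; rewrite ?(w_neq0 m) ?t_neq0 ?tt_neq0 ?tt1 ?pnatr_eq0 //.

Lemma K1 m : alpha_n q (m + 1) = alpha q * alpha_n q m + an q m.
Proof. cf. fin m. Qed.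
Lemma K2 m : alpha_n q (m - 1) = alpha q * alpha_n q m - an q m.
Proof. cf. fin m. Qed.
Lemma T1 m : an q (m + 1) = alpha q * an q m + (alpha q ^+ 2 - 1) * alpha_n q m.
Proof. cf. fin m. Qed.
Notation A := (alpha q ^+ 2 - 1).
Lemma T2 m : cn q (m + 1) = alpha q * an q m * Cn q (m + 1) + alpha q * cn q m
  + A * alpha_n q m * (Cn q (m + 1) + Cn q m - 1) + A * bn q m * Cn q (m - 1)
  - Cn q m * an q (m - 1).
Proof. cf. fin m. Qed.
Lemma T3 m : dn q (m + 1) = alpha q * cn q m * Cn q (m - 1) + alpha q * dn q m
  + A * alpha_n q m * Cn q m * Cn q (m - 1)
  + A * bn q m * Cn q (m - 1) * (Cn q (m - 1) + Cn q (m - 2) - 1)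
  - Cn q m * cn q (m - 1).
Proof. cf. fin m. Qed.
Lemma T4 m : alpha q * dn q m * Cn q (m - 3) + A * bn q m * Cn q (m - 1) * Cn q (m - 2) * Cn q (m - 3)
  - Cn q m * dn q (m - 1) = 0.
Proof. cf. fin m. Qed.

Lemma sg0 : sg 0 = 1. Proof. by rewrite /sgn expr0z. Qed.
Lemma w0 : w 0 = 1. Proof. by rewrite /w mul0r /Defs.qp powRr0. Qed.
Lemma sg1 : sg 1 = -1. Proof. by rewrite -[1]add0r sgD1 sg0. Qed.
Lemma w1 : w 1 = t. Proof. by rewrite -[1]add0r wD1 w0 mul1r. Qed.
Lemma C0 : Cn q 0 = 0. Proof. by rewrite Cn_cf sg0 w0 mul1r subrr !mul0r. Qed.

Lemma absS (F : comPzRingType) (al x am a am1 am_1 bm bm1 bm_1 C0 Cm1 Cm2 c d u1 u0 um1 um2 um3 : F) :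
 x*u0 = u1 + C0*um1 -> Cm1*(x*um2) = Cm1*(um1 + Cm2*um3) ->
 am1 = al*am + a -> am_1 = al*am - a ->
 c = bm1*C0 - al*bm*Cm1 - a*C0 -> d = (bm_1*C0 - al*bm*Cm1)*Cm2 ->
 al*x*(am*u0 + bm*Cm1*um2) + (a*u1 + c*um1 + d*um3) - C0*(am_1*um1 + bm_1*Cm2*um3)
   = am1*u1 + bm1*C0*um1.
Proof.
move=> E1 E2 -> -> -> ->.
apply/eqP; rewrite -subr_eq0; apply/eqP.
transitivity (al*am*(x*u0 - (u1 + C0*um1)) + al*bm*(Cm1*(x*um2) - Cm1*(um1 + Cm2*um3))).
  ring.
by rewrite E1 E2 !subrr !mulr0 addr0.
Qed.

Lemma absT (F : comPzRingType) (al A x a c d a1 c1 d1 am bm a_1 c_1 d_1 Cp1 C0 Cm1 Cm2 Cm3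
   u2 u1 u0 um1 um2 um3 um4 : F) :
 x*u0 = u1 + C0*um1 -> x*u1 = u2 + Cp1*u0 -> x*um1 = u0 + Cm1*um2 ->
 d*(x*um3) = d*(um2 + Cm3*um4) -> Cm1*(x*um2) = Cm1*(um1 + Cm2*um3) ->
 Cm2*(x*um3) = Cm2*(um2 + Cm3*um4) ->
 a1 = al*a + A*am ->
 c1 = al*a*Cp1 + al*c + A*am*(Cp1 + C0 - 1) + A*bm*Cm1 - C0*a_1 ->
 d1 = al*c*Cm1 + al*d + A*am*C0*Cm1 + A*bm*Cm1*(Cm1 + Cm2 - 1) - C0*c_1 ->
 al*d*Cm3 + A*bm*Cm1*Cm2*Cm3 - C0*d_1 = 0 ->
 al*x*(a*u1 + c*um1 + d*um3) + A*(x^+2-1)*(am*u0 + bm*Cm1*um2)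
   - C0*(a_1*u0 + c_1*um2 + d_1*um4) = a1*u2 + c1*u0 + d1*um2.
Proof.
move=> F0 F1 F2 F3 F4 F5 -> -> -> H4.
apply/eqP; rewrite -subr_eq0; apply/eqP.
transitivity (al*a*(x*u1 - (u2 + Cp1*u0)) + al*c*(x*um1 - (u0 + Cm1*um2))
  + al*(d*(x*um3) - d*(um2 + Cm3*um4))
  + A*am*(x*(x*u0 - (u1 + C0*um1)) + (x*u1 - (u2 + Cp1*u0)) + C0*(x*um1 - (u0 + Cm1*um2)))
  + A*bm*(x*(Cm1*(x*um2) - Cm1*(um1 + Cm2*um3)) + Cm1*(x*um1 - (u0 + Cm1*um2))
          + Cm1*(Cm2*(x*um3) - Cm2*(um2 + Cm3*um4)))
  + um4*(al*d*Cm3 + A*bm*Cm1*Cm2*Cm3 - C0*d_1)).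
  ring.
by rewrite F0 F1 F2 F3 F4 F5 H4 !subrr; ring.
Qed.

Lemma P_rec n : P q n.+2 = 'X * P q n.+1 - Cn q (n.+1)%:Z *: P q n.
Proof. by rewrite /P /=; case: (Ppair q n). Qed.

Lemma Pz_neg j : j < 0 -> Pz q j = 0.
Proof. by case: j. Qed.

Lemma Pz_rec (m : int) : 0 <= m -> Pz q (m + 1) = 'X * Pz q m - Cn q m *: Pz q (m - 1).
Proof.
case: m => // k _; case: k => [|k].
  rewrite (_ : Posz 0 + 1 = Posz 1) // (_ : Posz 0 - 1 = Negz 0) //=.
  by rewrite scaler0 subr0 mulr1.
rewrite (_ : Posz k.+1 + 1 = Posz k.+2); last by lia.
rewrite (_ : Posz k.+1 - 1 = Posz k); last by lia.
exact: P_rec.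
Qed.

Definition p (x : R) (j : int) := (Pz q j).[x].

Lemma prec x j : 0 <= j -> x * p x j = p x (j + 1) + Cn q j * p x (j - 1).
Proof. by move=> hj; rewrite /p Pz_rec // !hornerE; ring. Qed.

Lemma prec1 x j : Cn q (j + 1) * (x * p x j) = Cn q (j + 1) * (p x (j + 1) + Cn q j * p x (j - 1)).
Proof.
case: (lerP 0 j) => hj; first by rewrite prec.
case: (eqVneq j (-1)) => [->|hj1]; first by rewrite (_ : -1 + 1 = 0) // C0 !mul0r.
rewrite /p !Pz_neg; try lia.
by rewrite !horner0 !(mulr0, addr0).
Qed.

Lemma xsum s : xs q (s + 1/2) + xs q (s - 1/2) = 2 * alpha q * xs q s.
Proof.
have hz := qp_neq0 s; have ht := t_neq0.
rewrite /xs alpha_cf !qpN !qpD !qpN; field; rewrite ?hz ?ht //.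
Qed.

Lemma xdiff s : ((xs q (s + 1/2) - xs q (s - 1/2)) / 2) ^+ 2 = A * (xs q s ^+ 2 - 1).
Proof.
have hz := qp_neq0 s; have ht := t_neq0.
rewrite /xs alpha_cf !qpN !qpD !qpN; field; rewrite ?hz ?ht //.
Qed.

Definition Sv (a b : R) (f : {poly R}) := (f.[a] + f.[b]) / 2.
Definition Tv (a b : R) (f : {poly R}) := (a - b) / 2 * (f.[a] - f.[b]) / 2.

Lemma Sv_rec a b x c f g : alpha q * x = (a + b) / 2 ->
  Sv a b ('X * f - c *: g) = alpha q * x * Sv a b f + Tv a b f - c * Sv a b g.
Proof. move=> h; rewrite h /Sv /Tv !(hornerD, hornerN, hornerZ, hornerM, hornerX); by field. Qed.

Lemma Tv_rec a b x c f g : alpha q * x = (a + b) / 2 ->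
  Tv a b ('X * f - c *: g) = alpha q * x * Tv a b f + ((a - b) / 2) ^+ 2 * Sv a b f - c * Tv a b g.
Proof. move=> h; rewrite h /Sv /Tv !(hornerD, hornerN, hornerZ, hornerM, hornerX); by field. Qed.

Definition Q (a b x : R) (i : int) :=
 Sv a b (Pz q i) = alpha_n q i * p x i + bn q i * Cn q (i - 1) * p x (i - 2) /\
 Tv a b (Pz q i) = an q i * p x (i + 1) + cn q i * p x (i - 1) + dn q i * p x (i - 3).

Lemma stepQ a b x m : alpha q * x = (a + b) / 2 -> ((a - b) / 2) ^+ 2 = A * (x ^+ 2 - 1) ->
  1 <= m -> Q a b x (m - 1) -> Q a b x m -> Q a b x (m + 1).
Proof.
move=> hab hd hm [S1 T1'] [S0 T0].
have e1 : m - 1 - 1 = m - 2 by ring.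
have e2 : m - 1 - 2 = m - 3 by ring.
have e3 : m - 1 + 1 = m by ring.
have e4 : m - 1 - 3 = m - 4 by ring.
have e5 : m + 1 - 1 = m by ring.
have e6 : m + 1 - 2 = m - 1 by ring.
have e7 : m + 1 + 1 = m + 2 by ring.
have e8 : m + 1 - 3 = m - 2 by ring.
have e9 : m - 2 + 1 = m - 1 by ring.
have e10 : m - 2 - 1 = m - 3 by ring.
have e11 : m - 3 + 1 = m - 2 by ring.
have e12 : m - 3 - 1 = m - 4 by ring.
rewrite e1 e2 e3 e4 in S1 T1'.
have hm0 : 0 <= m by lia.
split.
  rewrite Pz_rec // (@Sv_rec a b x) // S0 T0 S1 e5 e6.
  apply: absS.
  - exact: prec.
  - by have := prec1 x (m - 2); rewrite e9 e10.
  - exact: K1.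
  - exact: K2.
  - by [].
  - by [].
rewrite Pz_rec // (@Tv_rec a b x) // hd T0 S0 T1' e5 e7 e8.
apply: absT.
- exact: prec.
- rewrite prec; [by rewrite e7 e5 | lia].
- rewrite prec; [by rewrite e3 e1 | lia].
- have := prec1 x (m - 3); rewrite e11 e12 => h; by rewrite /dn -[LHS]mulrA -[RHS]mulrA h.
- have h := prec1 x (m - 2); rewrite e9 e10 in h; exact: h.
- have h := prec1 x (m - 3); rewrite e11 e12 in h; exact: h.
- exact: T1.
- exact: T2.
- exact: T3.
- exact: T4.
Qed.

Lemma P0 : P q 0 = 1. Proof. by []. Qed.
Lemma P1 : P q 1 = 'X. Proof. by []. Qed.

Lemma Q0 a b x : Q a b x (Posz 0).
Proof.
split.
  rewrite /Sv /p /= P0 horner0 mulr0 addr0 alpha_n_cf w0 !hornerE.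
  by field.
rewrite /Tv /p /= P0 ?P1 !horner0 !mulr0 !addr0 !hornerE subrr mulr0 mul0r.
by rewrite /an gamma_n_cf w0 invr1 subrr mul0r mulr0 mul0r.
Qed.

Lemma base1 x : an q 1 * (x * x - Cn q 1) + cn q 1 = A * (x ^+ 2 - 1).
Proof. cf. rewrite sg1 w1. field. by rewrite t_neq0 tt1. Qed.

Lemma Q1 a b x : alpha q * x = (a + b) / 2 -> ((a - b) / 2) ^+ 2 = A * (x ^+ 2 - 1) ->
  Q a b x 1.
Proof.
move=> hab hd; split.
  rewrite /Sv /p /= P1 horner0 mulr0 addr0 alpha_n_cf w1 !hornerE.
  by rewrite -hab /alpha qpN div1r.
have h2 := prec x (j := 1) isT.
have hp1 : p x 1 = x by rewrite /p /= P1 hornerX.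
have hp0 : p x (1 - 1) = 1 by rewrite /p /= P0 hornerE.
have -> : p x (1 + 1) = x * x - Cn q 1 * 1 by rewrite -[p x (1+1)](addrK (Cn q 1 * p x (1 - 1))) -h2 hp0 hp1.
have hp3 : p x (1 - 3) = 0 by rewrite /p Pz_neg ?horner0 //; lia.
rewrite hp0 mulr1 hp3 mulr0 addr0 !mulr1 base1 -hd /Tv /= P1 !hornerX.
by rewrite expr2; ring.
Qed.

Lemma allQ a b x : alpha q * x = (a + b) / 2 -> ((a - b) / 2) ^+ 2 = A * (x ^+ 2 - 1) ->
  forall k : nat, Q a b x (Posz k) /\ Q a b x (Posz k.+1).
Proof.
move=> hab hd; elim=> [|k [IH0 IH1]]; first by split; [exact: Q0 | exact: Q1].
split=> //.
have e1 : Posz k.+1 - 1 = Posz k by lia.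
have e2 : Posz k.+1 + 1 = Posz k.+2 by lia.
rewrite -e2; apply: (stepQ hab hd) => //.
by rewrite e1.
Qed.

End H.


Unset Implicit Arguments.
Theorem mainTheorem5 (R : realType) (q : R) (hq0 : 0 < q) (hq1 : q < 1)
  (n : nat) (hn : (1 <= n)%N) :
  (forall s : R,
     Sq_at q (P q n) s =
       (alpha_n q n%:Z *: P q n + (bn q n%:Z * Cn q (n%:Z - 1)) *: Pz q (n%:Z - 2)).[xs q s])
  /\
  (forall s : R, xs q (s + 1/2) != xs q (s - 1/2) ->
     U2 q (xs q s) * Dq_at q (P q n) s =
       (an q n%:Z *: P q n.+1 + cn q n%:Z *: Pz q (n%:Z - 1)
        + dn q n%:Z *: Pz q (n%:Z - 3)).[xs q s]).
Proof.
have key s : Q q (xs q (s + 1/2)) (xs q (s - 1/2)) (xs q s) (Posz n).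
  have hab : alpha q * xs q s = (xs q (s + 1/2) + xs q (s - 1/2)) / 2.
    by rewrite (xsum hq0 s); field.
  exact: (proj1 (allQ hq0 hq1 hab (xdiff hq0 s) n)).
split=> s.
  have [h _] := key s.
  transitivity (Sv (xs q (s + 1/2)) (xs q (s - 1/2)) (Pz q (Posz n))); first by [].
  by rewrite h /p !(hornerD, hornerZ) mulrA.
move=> hne.
have [_ hT] := key s.
have e : Posz n + 1 = Posz n.+1 by lia.
rewrite e in hT.
rewrite !(hornerD, hornerZ) -[(P q n.+1).[_]]/(p q (xs q s) (Posz n.+1)) -hT.
rewrite /U2 -(xdiff hq0 s) /Dq_at /Tv.
have hne' : xs q (s + 1/2) - xs q (s - 1/2) != 0 by rewrite subr_eq0.
by field.
Qed.
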